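(* For every $(w_1,w_2)\in\mathcal{A}$ the equation $f(X):=X-f_1(f_2(X))=0$ admits a unique positive solution $X_0$. Consequently, setting $e^{c_1}=X_0$ and $e^{c_2}=f_2(X_0)$, the pair $v_i=w_i+c_i$ ($i=1,2$) satisfies $$(N-1+\kappa)\int_\Omega e^{2u_1^0+2v_1}-N\int_\Omega e^{u_1^0+v_1}-(\kappa-1)\int_\Omega e^{u_1^0+u_2^0+v_1+v_2}+\frac{b_1}{\lambda}=0,$$ $$\Big(\frac1{N-1}+\kappa\Big)\int_\Omega e^{2u_2^0+2v_2}-\frac N{N-1}\int_\Omega e^{u_2^0+v_2}-(\kappa-1)\int_\Omega e^{u_1^0+u_2^0+v_1+v_2}+\frac{b_2}{\lambda}=0.$$
   Context: Standing setting (doubly periodic case): $N\ge2$ integer, $\kappa>1$, $\lambda>0$; $\Omega$ a doubly periodic domain (flat torus) of area $|\Omega|$; integers $n_1,n_2\ge0$ and points $p_{is}\in\Omega$. $W^{1,2}(\Omega)$ = $\Omega$-periodic $L^2$ functions with $L^2$ gradient, $\dot W^{1,2}(\Omega)=\{w\in W^{1,2}(\Omega):\int_\Omega w=0\}$. $u_i^0$ solves $\Delta u_i^0=4\pi\sum_{s=1}^{n_i}\delta_{p_{is}}-\frac{4\pi n_i}{|\Omega|}$, $\int_\Omega u_i^0=0$. Set $b_1=\frac{4\pi((1+(N-1)\kappa)n_1+(\kappa-1)n_2)}{\kappa}$, $b_2=\frac{4\pi((N-1)(\kappa-1)n_1+(N-1+\kappa)n_2)}{(N-1)\kappa}$. The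 admissible set $\mathcal A$ is the set of $(w_1,w_2)\in\dot W^{1,2}(\Omega)\times\dot W^{1,2}(\Omega)$ with $$\Big(\int_\Omega e^{u_1^0+w_1}\Big)^2\ge\frac{4(N-1+\kappa)b_1}{N^2\lambda}\int_\Omega e^{2u_1^0+2w_1},\qquad \Big(\int_\Omega e^{u_2^0+w_2}\Big)^2\ge\frac{4(N-1)(1+(N-1)\kappa)b_2}{N^2\lambda}\int_\Omega e^{2u_2^0+2w_2}.$$ For $(w_1,w_2)\in\mathcal A$ and $X,Y\ge0$ let $E_{12}=\int_\Omega e^{u_1^0+u_2^0+w_1+w_2}$, $P_1(Y)=N\int_\Omega e^{u_1^0+w_1}+(\kappa-1)YE_{12}$, $P_2(X)=\frac N{N-1}\int_\Omega e^{u_2^0+w_2}+(\kappa-1)XE_{12}$, $$f_1(Y)=\frac{P_1(Y)+\sqrt{P_1(Y)^2-\frac{4(N-1+\kappa)b_1}{\lambda}\int_\Omega e^{2u_1^0+2w_1}}}{2(N-1+\kappa)\int_\Omega e^{2u_1^0+2w_1}},\quad f_2(X)=\frac{P_2(X)+\sqrt{P_2(X)^2-\frac{4(1+(N-1)\kappa)b_2}{(N-1)\lambda}\int_\Omega e^{2u_2^0+2w_2}}}{2\big(\frac1{N-1}+\kappa\big)\int_\Omega e^{2u_2^0+2w_2}}.$$ *)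

(* Defs.v *)
From Stdlib Require Import Reals.
Open Scope R_scope.

(* An abstract integral over the (periodic) domain Omega, represented by a type
   [T] of points and a functional [I] on real functions: linear, monotone, and
   strictly positive on strictly positive functions (as the Lebesgue integral
   over a flat torus of positive area is, on the exponential-type integrands
   occurring here). *)
Definition is_integral {T : Type} (I : (T -> R) -> R) : Prop :=
  (forall f g : T -> R, I (fun x => f x + g x) = I f + I g) /\
  (forall (c : R) (f : T -> R), I (fun x => c * f x) = c * I f) /\
  (forall f g : T -> R, (forall x, f x <= g x) -> I f <= I g) /\
  (forall f : T -> R, (forall x, 0 < f x) -> 0 < I f).

Definition b1 (N : nat) (kappa : R) (n1 n2 : nat) : R :=
  4 * PI * ((1 + (INR N - 1) * kappa) * INR n1 + (kappa - 1) * INR n2) / kappa.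

Definition b2 (N : nat) (kappa : R) (n1 n2 : nat) : R :=
  4 * PI * ((INR N - 1) * (kappa - 1) * INR n1 + (INR N - 1 + kappa) * INR n2)
  / ((INR N - 1) * kappa).

Section Fns.
Context {T : Type} (I : (T -> R) -> R) (N : nat) (kappa lambda : R) (n1 n2 : nat)
        (u1 u2 w1 w2 : T -> R).

Definition admissible : Prop :=
  I w1 = 0 /\ I w2 = 0 /\
  (I (fun x => exp (u1 x + w1 x))) ^ 2 >=
    4 * (INR N - 1 + kappa) * b1 N kappa n1 n2 / (INR N ^ 2 * lambda)
      * I (fun x => exp (2 * u1 x + 2 * w1 x)) /\
  (I (fun x => exp (u2 x + w2 x))) ^ 2 >=
    4 * (INR N - 1) * (1 + (INR N - 1) * kappa) * b2 N kappa n1 n2 / (INR N ^ 2 * lambda)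
      * I (fun x => exp (2 * u2 x + 2 * w2 x)).

Definition E12 : R := I (fun x => exp (u1 x + u2 x + w1 x + w2 x)).

Definition P1 (Y : R) : R := INR N * I (fun x => exp (u1 x + w1 x)) + (kappa - 1) * Y * E12.

Definition P2 (X : R) : R :=
  INR N / (INR N - 1) * I (fun x => exp (u2 x + w2 x)) + (kappa - 1) * X * E12.

Definition f1 (Y : R) : R :=
  (P1 Y + sqrt (P1 Y ^ 2 - 4 * (INR N - 1 + kappa) * b1 N kappa n1 n2 / lambda
                              * I (fun x => exp (2 * u1 x + 2 * w1 x))))
  / (2 * (INR N - 1 + kappa) * I (fun x => exp (2 * u1 x + 2 * w1 x))).

Definition f2 (X : R) : R :=
  (P2 X + sqrt (P2 X ^ 2 - 4 * (1 + (INR N - 1) * kappa) * b2 N kappa n1 n2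
                              / ((INR N - 1) * lambda)
                              * I (fun x => exp (2 * u2 x + 2 * w2 x))))
  / (2 * (1 / (INR N - 1) + kappa) * I (fun x => exp (2 * u2 x + 2 * w2 x))).

End Fns.

(* Main.v *)
Require Import Defs.
From Coquelicot Require Import Coquelicot.
From Stdlib Require Import Reals Lra Psatz.
Open Scope R_scope.
Open Scope R_scope.

Definition F (c D P : R) : R := (P + sqrt (P ^ 2 - D)) / c.

Lemma sqrt_conc D P Q t : 0 <= D -> D <= P^2 -> D <= Q^2 -> 0 <= P -> 0 <= Q ->
  0 <= t <= 1 ->
  (1-t)*sqrt(P^2-D) + t*sqrt(Q^2-D) <= sqrt(((1-t)*P+t*Q)^2 - D).
Proof.
  intros HD HP HQ P0 Q0 Ht.
  assert (hs := sqrt_pos (P^2-D)). assert (hr := sqrt_pos (Q^2-D)).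
  assert (hs2 := sqrt_sqrt (P^2-D) ltac:(lra)).
  assert (hr2 := sqrt_sqrt (Q^2-D) ltac:(lra)).
  set (s := sqrt (P^2-D)) in *. set (r := sqrt (Q^2-D)) in *.
  assert (PQD : D <= P*Q).
  { destruct (Rle_lt_dec D (P*Q)) as [h|h]; auto.
    assert (D*D <= P^2*Q^2) by (apply Rmult_le_compat; lra).
    assert (0 <= P*Q) by nra. nra. }
  assert (sr : s*r <= P*Q - D).
  { destruct (Rle_lt_dec (s*r) (P*Q-D)) as [h|h]; auto.
    assert (0 <= s*r) by nra.
    assert ((s*r)*(s*r) = (P^2-D)*(Q^2-D)) by (transitivity ((s*s)*(r*r)); [ring| rewrite hs2, hr2; ring]).
    assert ((P*Q-D)*(P*Q-D) < (s*r)*(s*r)) by nra.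
    assert (0 <= D*((P-Q)*(P-Q))) by (apply Rmult_le_pos; [lra| apply Rle_0_sqr]).
    nra. }
  assert (L0 : 0 <= (1-t)*s + t*r) by nra.
  rewrite <- (sqrt_pow2 ((1-t)*s+t*r) L0).
  apply sqrt_le_1_alt.
  assert (H1 : 0 <= t*(1-t)*(P*Q-D-s*r)) by (apply Rmult_le_pos; nra).
  assert (E : ((1-t)*P+t*Q)^2 - D - ((1-t)*s+t*r)^2
     = 2*(t*(1-t)*(P*Q-D-s*r)) + (1-t)^2*((P^2-D) - s*s) + t^2*((Q^2-D)-r*r)) by ring.
  rewrite hs2, hr2 in E. 
  replace (P^2-D-(P^2-D)) with 0 in E by ring.
  replace (Q^2-D-(Q^2-D)) with 0 in E by ring.
  lra.
Qed.

Section G.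
Variables c D p q : R.
Hypotheses (Hc : 0 < c) (HD : 0 <= D) (Hp : 0 < p) (HDp : D <= p^2) (Hq : 0 <= q).
Definition g y := F c D (p + q*y).

Lemma g_disc y : 0 <= y -> D <= (p+q*y)^2.
Proof using Hc HD Hp HDp Hq. intros. assert (0 <= q*y) by (apply Rmult_le_pos; lra). nra. Qed.

Lemma g_pos y : 0 <= y -> 0 < g y.
Proof using Hc HD Hp HDp Hq. intros. unfold g, F. assert (h:=sqrt_pos ((p+q*y)^2-D)).
  apply Rdiv_lt_0_compat; nra. Qed.

Lemma g_mono y z : 0 <= y -> y <= z -> g y <= g z.
Proof using Hc HD Hp HDp Hq. intros. unfold g, F. unfold Rdiv. apply Rmult_le_compat_r.
  left; apply Rinv_0_lt_compat; lra.
  assert (0 <= q*y) by (apply Rmult_le_pos; lra).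
  assert (q*y <= q*z) by (apply Rmult_le_compat_l; lra).
  assert (sqrt ((p+q*y)^2-D) <= sqrt ((p+q*z)^2-D)). apply sqrt_le_1_alt. nra.
  lra. Qed.

Lemma g_ub y : 0 <= y -> g y <= 2*(p+q*y)/c.
Proof using Hc HD Hp HDp Hq. intros. unfold g, F. unfold Rdiv. apply Rmult_le_compat_r.
  left; apply Rinv_0_lt_compat; lra.
  assert (sqrt ((p+q*y)^2-D) <= p+q*y).
  { rewrite <- (sqrt_pow2 (p+q*y)) at 2 by nra. apply sqrt_le_1_alt. lra. }
  lra. Qed.

Lemma g_conc y z t : 0 <= y -> 0 <= z -> 0 <= t <= 1 ->
  (1-t)*g y + t*g z <= g ((1-t)*y + t*z).
Proof using Hc HD Hp HDp Hq. intros. unfold g, F.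
  replace (p + q*((1-t)*y+t*z)) with ((1-t)*(p+q*y) + t*(p+q*z)) by ring.
  assert (h := sqrt_conc D (p+q*y) (p+q*z) t HD (g_disc y H) (g_disc z H0) ltac:(nra) ltac:(nra) H1).
  apply Rle_trans with (((1-t)*(p+q*y) + t*(p+q*z) + ((1-t)*sqrt((p+q*y)^2-D) + t*sqrt((p+q*z)^2-D)))/c).
  right. field. lra.
  unfold Rdiv. apply Rmult_le_compat_r. left; apply Rinv_0_lt_compat; lra. lra. Qed.

Lemma g_root y : 0 <= y -> c^2 * (g y)^2 - 2*c*(p+q*y)*g y + D = 0.
Proof using Hc HD Hp HDp Hq. intros. unfold g, F. assert (h := sqrt_sqrt ((p+q*y)^2-D) ltac:(pose proof (g_disc y H); lra)).
  set (s := sqrt _) in *. set (P := p+q*y) in *.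
  replace (c^2*((P+s)/c)^2 - 2*c*P*((P+s)/c) + D) with (s*s - (P^2 - D)) by (field; lra).
  rewrite h. ring. Qed.

Lemma g_cont y : continuous g y.
Proof.
  unfold g, F.
  apply (continuous_ext (fun y => mult (plus (p+q*y) (sqrt ((p+q*y)^2 - D))) (/c))).
  { intros; unfold mult, plus; simpl. unfold Rdiv. reflexivity. }
  apply (@continuous_mult _ R_AbsRing); [|apply continuous_const].
  assert (Hl : continuous (fun y => p + q*y) y).
  { apply (continuous_ext (fun y => plus p (mult q y))). intros; reflexivity.
    apply (@continuous_plus _ R_AbsRing R_NormedModule). apply continuous_const. apply (@continuous_mult _ R_AbsRing). apply continuous_const. apply continuous_id. }
  apply (@continuous_plus _ R_AbsRing R_NormedModule). exact Hl.
  apply continuous_sqrt_comp.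
  apply (continuous_ext (fun y => plus (mult (p+q*y) (mult (p+q*y) 1)) (opp D))).
  { intros; unfold mult, plus, opp; simpl. ring. }
  apply (@continuous_plus _ R_AbsRing R_NormedModule). apply (@continuous_mult _ R_AbsRing). exact Hl. apply (@continuous_mult _ R_AbsRing). exact Hl. apply continuous_const.
  apply continuous_const.
Qed.
End G.

Lemma core c1 D1 p1 q1 c2 D2 p2 q2 (h : R -> R) :
 0<c1 -> 0<=D1 -> 0<p1 -> D1<=p1^2 -> 0<=q1 ->
 0<c2 -> 0<=D2 -> 0<p2 -> D2<=p2^2 -> 0<=q2 ->
 4*q1*q2 < c1*c2 ->
 (forall X, h X = g c1 D1 p1 q1 (g c2 D2 p2 q2 X)) ->
 exists! X, 0 < X /\ X - h X = 0.
Proof.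
  intros Hc1 HD1 Hp1 HDp1 Hq1 Hc2 HD2 Hp2 HDp2 Hq2 Hqc Hh.
  pose proof (g_pos c1 D1 p1 q1 Hc1 HD1 Hp1 HDp1 Hq1) as pos1.
  pose proof (g_pos c2 D2 p2 q2 Hc2 HD2 Hp2 HDp2 Hq2) as pos2.
  pose proof (g_mono c1 D1 p1 q1 Hc1 HD1 Hp1 HDp1 Hq1) as mono1.
  pose proof (g_conc c1 D1 p1 q1 Hc1 HD1 Hp1 HDp1 Hq1) as conc1.
  pose proof (g_conc c2 D2 p2 q2 Hc2 HD2 Hp2 HDp2 Hq2) as conc2.
  pose proof (g_ub c1 D1 p1 q1 Hc1 HD1 Hp1 HDp1 Hq1) as ub1.
  pose proof (g_ub c2 D2 p2 q2 Hc2 HD2 Hp2 HDp2 Hq2) as ub2.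
  set (G1 := g c1 D1 p1 q1) in *. set (G2 := g c2 D2 p2 q2) in *.
  assert (h0 : 0 < h 0) by (rewrite Hh; apply pos1; left; apply pos2; lra).
  assert (uniq : forall x1 x2, 0 < x1 -> x1 < x2 -> x1 - h x1 = 0 -> x2 - h x2 = 0 -> False).
  { intros x1 x2 H1 H12 E1 E2.
    set (t := x1/x2).
    assert (Ht0 : 0 < t) by (apply Rdiv_lt_0_compat; lra).
    assert (Ht1 : t < 1) by (unfold t; apply (Rmult_lt_reg_r x2); [lra|]; field_simplify; lra).
    assert (Hx1 : x1 = (1-t)*0 + t*x2) by (unfold t; field; lra).
    assert (A := conc2 0 x2 t ltac:(lra) ltac:(lra) ltac:(lra)).
    rewrite <- Hx1 in A.
    assert (P0 := pos2 0 ltac:(lra)). assert (P2 := pos2 x2 ltac:(lra)).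
    assert (Q0 : 0 <= (1-t)*G2 0 + t*G2 x2) by (assert (0 <= (1-t)*G2 0) by (apply Rmult_le_pos; lra); assert (0 <= t*G2 x2) by (apply Rmult_le_pos; lra); lra).
    assert (B := mono1 _ _ Q0 A).
    assert (C := conc1 (G2 0) (G2 x2) t ltac:(lra) ltac:(lra) ltac:(lra)).
    rewrite Hh in E1, E2.
    replace (G1 (G2 x2)) with x2 in C by lra.
    assert (0 < (1-t) * G1 (G2 0)) by (apply Rmult_lt_0_compat; [lra| apply pos1; lra]).
    lra. }
    set (dl := c1*c2 - 4*q1*q2).
    set (M := (2*p1*c2 + 4*q1*p2 + 1)/dl).
    assert (Hdl : 0 < dl) by (unfold dl; lra).
    assert (HM : 0 < M) by (apply Rdiv_lt_0_compat; nra).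
    assert (HMd : M*dl = 2*p1*c2 + 4*q1*p2 + 1) by (unfold M; field; lra).
    assert (fM : 0 < M - h M).
    { rewrite Hh.
      assert (u2 := ub2 M ltac:(lra)).
      assert (u1 := ub1 (G2 M) ltac:(left; apply pos2; lra)).
      assert (q1 * G2 M <= q1 * (2*(p2+q2*M)/c2)) by (apply Rmult_le_compat_l; lra).
      assert (E : 2*(p1 + q1*(2*(p2+q2*M)/c2))/c1 = (2*p1*c2 + 4*q1*p2 + 4*q1*q2*M)/(c1*c2))
        by (field; lra).
      assert (2*(p1+q1*G2 M)/c1 <= 2*(p1 + q1*(2*(p2+q2*M)/c2))/c1).
      { unfold Rdiv. apply Rmult_le_compat_r. left; apply Rinv_0_lt_compat; lra. lra. }
      assert ((2*p1*c2 + 4*q1*p2 + 4*q1*q2*M)/(c1*c2) < M).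
      { apply (Rmult_lt_reg_r (c1*c2)). nra. unfold Rdiv. rewrite Rmult_assoc, Rinv_l by nra.
        unfold dl in HMd. nra. }
      lra. }
    assert (cont : continuity (fun X => X - h X)).
    { intro x. apply (continuity_pt_ext (fun X => X - G1 (G2 X))). intros; rewrite Hh; reflexivity.
      apply continuity_pt_filterlim.
      apply (continuous_ext (T:=R_UniformSpace) (U:=R_UniformSpace) (fun X : R => plus X (opp (G1 (G2 X)))) (fun X => X - G1 (G2 X)) x). intros; reflexivity.
      apply (@continuous_plus _ R_AbsRing R_NormedModule). apply continuous_id.
      apply (@continuous_opp _ R_AbsRing R_NormedModule).
      apply continuous_comp. apply g_cont. apply g_cont. }
    destruct (IVT _ 0 M cont HM ltac:(lra) fM) as [z [Hz Hfz]].
    exists z. split.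
    + split; [|exact Hfz]. destruct (Req_dec z 0) as [e|e]. subst z. lra. lra.
    + intros y [Hy Hfy].
      assert (Hz0 : 0 < z). { destruct (Req_dec z 0) as [e|e]. subst z. lra. lra. }
      destruct (Rtotal_order z y) as [l|[e|l]]; auto.
      exfalso; exact (uniq z y Hz0 l Hfz Hfy).
      exfalso; exact (uniq y z Hy l Hfy Hfz).
Qed.

Section Integ.
Context {T : Type} (I : (T -> R) -> R) (HI : is_integral I).

Lemma I_ext f h : (forall x, f x = h x) -> I f = I h.
Proof. destruct HI as [_ [_ [Hm _]]]. intros H. apply Rle_antisym; apply Hm; intros; rewrite H; lra. Qed.

Lemma I_nonneg f : (forall x, 0 <= f x) -> 0 <= I f.
Proof. destruct HI as [_ [Hs [Hm _]]]. intros H.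
  assert (I (fun _ => 0) = 0).
  { rewrite (I_ext (fun _ => 0) (fun x => 0 * (fun _ => 0) x)) by (intros; ring).
    rewrite Hs. ring. }
  rewrite <- H0. apply Hm. exact H. Qed.

Lemma I_lin3 a b f1 f2 f3 : I (fun x => a * f1 x + (b * f2 x + f3 x)) = a * I f1 + (b * I f2 + I f3).
Proof. destruct HI as [Ha [Hs _]].
  pose proof (Ha (fun x => a * f1 x) (fun x => b * f2 x + f3 x)) as H1. cbv beta in H1. rewrite H1.
  pose proof (Ha (fun x => b * f2 x) f3) as H2. cbv beta in H2. rewrite H2.
  rewrite !Hs. reflexivity. Qed.

Lemma I_shift (e e' : T -> R) s : (forall x, e x = e' x + s) ->
  I (fun x => exp (e x)) = exp s * I (fun x => exp (e' x)).
Proof. destruct HI as [_ [Hs _]]. intros H. rewrite <- Hs. apply I_ext.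
  intros; rewrite H, exp_plus; ring. Qed.

Lemma CS (a b : T -> R) :
  (I (fun x => exp (a x + b x)))^2 <= I (fun x => exp (2*a x)) * I (fun x => exp (2*b x)).
Proof. destruct HI as [_ [_ [_ Hp]]].
  set (E := I (fun x => exp (a x + b x))). set (B1 := I (fun x => exp (2*a x))).
  set (B2 := I (fun x => exp (2*b x))).
  assert (HB1 : 0 < B1) by (apply Hp; intros; apply exp_pos).
  assert (Ht : forall t, 0 <= t^2 * B1 + ((-2*t) * E + B2)).
  { intro t. unfold B1, E, B2. rewrite <- I_lin3. apply I_nonneg. intro x.
    replace (t ^ 2 * exp (2 * a x) + (-2 * t * exp (a x + b x) + exp (2 * b x)))
      with ((t * exp (a x) - exp (b x))^2).
    apply pow2_ge_0.
    replace (2 * a x) with (a x + a x) by ring. replace (2 * b x) with (b x + b x) by ring.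
    rewrite !exp_plus. ring. }
  specialize (Ht (E/B1)).
  replace ((E/B1)^2*B1 + (-2*(E/B1)*E + B2)) with (B2 - E^2/B1) in Ht by (field; lra).
  assert (E^2/B1 <= B2) by lra.
  apply (Rmult_le_reg_r (/B1)). apply Rinv_0_lt_compat; lra.
  replace (B1*B2*/B1) with B2 by (field; lra). exact H.
Qed.
End Integ.

Theorem proposition1 (N : nat) (kappa lambda : R) (n1 n2 : nat)
  (T : Type) (I : (T -> R) -> R) (u1 u2 w1 w2 : T -> R) :
  (2 <= N)%nat -> 1 < kappa -> 0 < lambda ->
  is_integral I ->
  admissible I N kappa lambda n1 n2 u1 u2 w1 w2 ->
  (exists! X0 : R, 0 < X0 /\
     X0 - f1 I N kappa lambda n1 n2 u1 u2 w1 w2 (f2 I N kappa lambda n1 n2 u1 u2 w1 w2 X0) = 0)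
  /\
  (forall X0 : R, 0 < X0 ->
     X0 - f1 I N kappa lambda n1 n2 u1 u2 w1 w2 (f2 I N kappa lambda n1 n2 u1 u2 w1 w2 X0) = 0 ->
     let c1 := ln X0 in
     let c2 := ln (f2 I N kappa lambda n1 n2 u1 u2 w1 w2 X0) in
     let v1 := fun x => w1 x + c1 in
     let v2 := fun x => w2 x + c2 in
     (INR N - 1 + kappa) * I (fun x => exp (2 * u1 x + 2 * v1 x))
       - INR N * I (fun x => exp (u1 x + v1 x))
       - (kappa - 1) * I (fun x => exp (u1 x + u2 x + v1 x + v2 x))
       + b1 N kappa n1 n2 / lambda = 0 /\
     (1 / (INR N - 1) + kappa) * I (fun x => exp (2 * u2 x + 2 * v2 x))
       - INR N / (INR N - 1) * I (fun x => exp (u2 x + v2 x))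
       - (kappa - 1) * I (fun x => exp (u1 x + u2 x + v1 x + v2 x))
       + b2 N kappa n1 n2 / lambda = 0).
Proof.
  intros HN Hk Hl HI Had.
  assert (HI' := HI).
  destruct HI' as [Hadd [Hsc [Hmon Hpos]]].
  destruct Had as [Hw1 [Hw2 [Ad1 Ad2]]].
  assert (Hn : 2 <= INR N).
  { replace 2 with (INR 2) by (simpl; ring). apply le_INR. exact HN. }
  assert (Hcs := CS I HI (fun x => u1 x + w1 x) (fun x => u2 x + w2 x)).
  cbv beta in Hcs.
  rewrite (I_ext I HI (fun x => exp (2 * (u1 x + w1 x))) (fun x => exp (2 * u1 x + 2 * w1 x)))
    in Hcs by (intros; f_equal; ring).
  rewrite (I_ext I HI (fun x => exp (2 * (u2 x + w2 x))) (fun x => exp (2 * u2 x + 2 * w2 x)))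
    in Hcs by (intros; f_equal; ring).
  rewrite (I_ext I HI (fun x => exp (u1 x + w1 x + (u2 x + w2 x))) (fun x => exp (u1 x + u2 x + w1 x + w2 x)))
    in Hcs by (intros; f_equal; ring).
  assert (Ef1 : forall Y, f1 I N kappa lambda n1 n2 u1 u2 w1 w2 Y =
     g (2 * (INR N - 1 + kappa) * I (fun x => exp (2 * u1 x + 2 * w1 x)))
       (4 * (INR N - 1 + kappa) * b1 N kappa n1 n2 / lambda * I (fun x => exp (2 * u1 x + 2 * w1 x)))
       (INR N * I (fun x => exp (u1 x + w1 x)))
       ((kappa - 1) * E12 I u1 u2 w1 w2) Y).
  { intro Y. unfold g. change (f1 I N kappa lambda n1 n2 u1 u2 w1 w2 Y) with
      (F (2 * (INR N - 1 + kappa) * I (fun x => exp (2 * u1 x + 2 * w1 x)))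
       (4 * (INR N - 1 + kappa) * b1 N kappa n1 n2 / lambda * I (fun x => exp (2 * u1 x + 2 * w1 x)))
       (P1 I N kappa u1 u2 w1 w2 Y)).
    f_equal. unfold P1. ring. }
  assert (Ef2 : forall X, f2 I N kappa lambda n1 n2 u1 u2 w1 w2 X =
     g (2 * (1 / (INR N - 1) + kappa) * I (fun x => exp (2 * u2 x + 2 * w2 x)))
       (4 * (1 + (INR N - 1) * kappa) * b2 N kappa n1 n2 / ((INR N - 1) * lambda) * I (fun x => exp (2 * u2 x + 2 * w2 x)))
       (INR N / (INR N - 1) * I (fun x => exp (u2 x + w2 x)))
       ((kappa - 1) * E12 I u1 u2 w1 w2) X).
  { intro X. unfold g. change (f2 I N kappa lambda n1 n2 u1 u2 w1 w2 X) with
      (F (2 * (1 / (INR N - 1) + kappa) * I (fun x => exp (2 * u2 x + 2 * w2 x)))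
       (4 * (1 + (INR N - 1) * kappa) * b2 N kappa n1 n2 / ((INR N - 1) * lambda) * I (fun x => exp (2 * u2 x + 2 * w2 x)))
       (P2 I N kappa u1 u2 w1 w2 X)).
    f_equal. unfold P2. ring. }
  unfold E12 in Ef1, Ef2.
  set (A1 := I (fun x => exp (u1 x + w1 x))) in *.
  set (A2 := I (fun x => exp (u2 x + w2 x))) in *.
  set (B1 := I (fun x => exp (2 * u1 x + 2 * w1 x))) in *.
  set (B2 := I (fun x => exp (2 * u2 x + 2 * w2 x))) in *.
  set (E := I (fun x => exp (u1 x + u2 x + w1 x + w2 x))) in *.
  assert (HA1 : 0 < A1) by (apply Hpos; intros; apply exp_pos).
  assert (HA2 : 0 < A2) by (apply Hpos; intros; apply exp_pos).
  assert (HB1 : 0 < B1) by (apply Hpos; intros; apply exp_pos).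
  assert (HB2 : 0 < B2) by (apply Hpos; intros; apply exp_pos).
  assert (HE : 0 < E) by (apply Hpos; intros; apply exp_pos).
  set (n := INR N) in *.
  assert (Hb1 : 0 <= b1 N kappa n1 n2).
  { unfold b1, Rdiv. fold n. pose proof PI_RGT_0. pose proof (pos_INR n1). pose proof (pos_INR n2).
    apply Rmult_le_pos; [|left; apply Rinv_0_lt_compat; lra].
    apply Rmult_le_pos; [lra|].
    assert (0 <= (1 + (n-1)*kappa)) by nra. assert (0 <= kappa - 1) by lra.
    assert (0 <= (1 + (n-1)*kappa) * INR n1) by (apply Rmult_le_pos; lra).
    assert (0 <= (kappa-1) * INR n2) by (apply Rmult_le_pos; lra). lra. }
  assert (Hb2 : 0 <= b2 N kappa n1 n2).
  { unfold b2, Rdiv. fold n. pose proof PI_RGT_0. pose proof (pos_INR n1). pose proof (pos_INR n2).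
    apply Rmult_le_pos; [|left; apply Rinv_0_lt_compat; nra].
    apply Rmult_le_pos; [lra|].
    assert (0 <= (n-1)*(kappa-1)) by nra. assert (0 <= n - 1 + kappa) by lra.
    assert (0 <= (n-1)*(kappa-1) * INR n1) by (apply Rmult_le_pos; lra).
    assert (0 <= (n-1+kappa) * INR n2) by (apply Rmult_le_pos; lra). lra. }
  set (bb1 := b1 N kappa n1 n2) in *. set (bb2 := b2 N kappa n1 n2) in *.
  set (c1 := 2 * (n - 1 + kappa) * B1) in *.
  set (D1 := 4 * (n - 1 + kappa) * bb1 / lambda * B1) in *.
  set (p1 := n * A1) in *.
  set (c2 := 2 * (1 / (n - 1) + kappa) * B2) in *.
  set (D2 := 4 * (1 + (n - 1) * kappa) * bb2 / ((n - 1) * lambda) * B2) in *.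
  set (p2 := n / (n - 1) * A2) in *.
  set (q := (kappa - 1) * E) in *.
  assert (Hc1 : 0 < c1) by (unfold c1; apply Rmult_lt_0_compat; lra).
  assert (Hinv : 0 < 1/(n-1)) by (apply Rdiv_lt_0_compat; lra).
  assert (Hc2 : 0 < c2) by (unfold c2; apply Rmult_lt_0_compat; lra).
  assert (HD1 : 0 <= D1).
  { unfold D1, Rdiv. apply Rmult_le_pos; [|lra]. apply Rmult_le_pos; [|left; apply Rinv_0_lt_compat; lra].
    apply Rmult_le_pos; lra. }
  assert (HD2 : 0 <= D2).
  { unfold D2, Rdiv. apply Rmult_le_pos; [|lra]. apply Rmult_le_pos; [|left; apply Rinv_0_lt_compat; nra].
    apply Rmult_le_pos; nra. }
  assert (Hp1 : 0 < p1) by (unfold p1; apply Rmult_lt_0_compat; lra).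
  assert (Hp2 : 0 < p2) by (unfold p2; apply Rmult_lt_0_compat; [apply Rdiv_lt_0_compat|]; lra).
  assert (Hq : 0 <= q) by (unfold q; apply Rmult_le_pos; lra).
  assert (HDp1 : D1 <= p1^2).
  { replace D1 with (n^2 * (4 * (n - 1 + kappa) * bb1 / (n ^ 2 * lambda) * B1)) by (unfold D1; field; lra).
    replace (p1^2) with (n^2 * A1^2) by (unfold p1; ring).
    apply Rmult_le_compat_l. nra. lra. }
  assert (HDp2 : D2 <= p2^2).
  { replace D2 with ((n/(n-1))^2 * (4 * (n - 1) * (1 + (n - 1) * kappa) * bb2 / (n ^ 2 * lambda) * B2))
      by (unfold D2; field; lra).
    replace (p2^2) with ((n/(n-1))^2 * A2^2) by (unfold p2; ring).
    apply Rmult_le_compat_l. nra. lra. }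
  assert (Hqc : 4*q*q < c1*c2).
  { unfold q, c1, c2.
    assert ((kappa-1)*(kappa-1) < (n-1+kappa)*(1/(n-1)+kappa)) by nra.
    assert (0 < B1*B2) by nra.
    assert ((kappa-1)*(kappa-1)*(E^2) <= (kappa-1)*(kappa-1)*(B1*B2)) by (apply Rmult_le_compat_l; nra).
    nra. }
  split.
  - apply (core c1 D1 p1 q c2 D2 p2 q (fun X => f1 I N kappa lambda n1 n2 u1 u2 w1 w2 (f2 I N kappa lambda n1 n2 u1 u2 w1 w2 X)));
      auto.
    intro X. rewrite Ef2, Ef1. reflexivity.
  - intros X0 HX0 Hfx. cbv beta zeta.
    rewrite Ef2 in *. rewrite Ef1 in Hfx.
    set (Y0 := g c2 D2 p2 q X0) in *.
    assert (HY0 : 0 < Y0) by (apply g_pos; auto; lra).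
    assert (HXY : X0 = g c1 D1 p1 q Y0) by lra.
    assert (R1 := g_root c1 D1 p1 q Hc1 HD1 Hp1 HDp1 Hq Y0 ltac:(lra)).
    assert (R2 := g_root c2 D2 p2 q Hc2 HD2 Hp2 HDp2 Hq X0 ltac:(lra)).
    rewrite <- HXY in R1. fold Y0 in R2.
    rewrite (I_shift I HI (fun x => 2 * u1 x + 2 * (w1 x + ln X0)) (fun x => 2 * u1 x + 2 * w1 x) (ln X0 + ln X0)) by (intros; ring).
    rewrite (I_shift I HI (fun x => u1 x + (w1 x + ln X0)) (fun x => u1 x + w1 x) (ln X0)) by (intros; ring).
    rewrite (I_shift I HI (fun x => u1 x + u2 x + (w1 x + ln X0) + (w2 x + ln Y0)) (fun x => u1 x + u2 x + w1 x + w2 x) (ln X0 + ln Y0)) by (intros; ring).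
    rewrite (I_shift I HI (fun x => 2 * u2 x + 2 * (w2 x + ln Y0)) (fun x => 2 * u2 x + 2 * w2 x) (ln Y0 + ln Y0)) by (intros; ring).
    rewrite (I_shift I HI (fun x => u2 x + (w2 x + ln Y0)) (fun x => u2 x + w2 x) (ln Y0)) by (intros; ring).
    fold A1 A2 B1 B2 E.
    rewrite !exp_plus, !exp_ln by lra.
    split.
    + apply (Rmult_eq_reg_l (4*(n-1+kappa)*B1)); [|nra].
      rewrite Rmult_0_r. rewrite <- R1. unfold c1, D1, p1, q. field. lra.
    + apply (Rmult_eq_reg_l (4*(1/(n-1)+kappa)*B2)); [|nra].
      rewrite Rmult_0_r. rewrite <- R2. unfold c2, D2, p2, q. field. lra.
Qed.
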